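(* Let $I\subseteq\mathbb{R}$ be an open interval (possibly unbounded), $\Sigma=I\times\mathbb{R}$, and let $F=(P,Q)\in C^1(\Sigma,\mathbb{R}^2)$ be non-singular. If every level set $\{(x,y)\in\Sigma: P(x,y)=c\}$, $c\in\mathbb{R}$, is connected (or every level set $\{(x,y)\in\Sigma: Q(x,y)=c\}$, $c\in\mathbb{R}$, is connected), then $F$ is injective.
   Context: $F$ is non-singular if its Jacobian determinant $d_F=P_xQ_y-P_yQ_x$ is nonzero at every point of $\Sigma$. *)

(* Defs.v *)
From HB Require Import structures.
From mathcomp Require Import all_boot all_order all_algebra.
From mathcomp Require Import all_classical all_reals all_analysis.
Set Implicit Arguments. Unset Strict Implicit. Unset Printing Implicit Defensive.
Import Order.TTheory GRing.Theory Num.Theory.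
Import numFieldNormedType.Exports.
Local Open Scope classical_set_scope.
Local Open Scope ring_scope.

Definition strip (R : realType) (I : set R) : set (R * R) := I `*` setT.

Definition dx (R : realType) (f : R * R -> R) (p : R * R) : R := 'D_((1, 0) : R * R) f p.
Definition dy (R : realType) (f : R * R -> R) (p : R * R) : R := 'D_((0, 1) : R * R) f p.

Definition C1_on (R : realType) (S : set (R * R)) (f : R * R -> R) : Prop :=
  forall p, S p ->
    [/\ derivable f p ((1, 0) : R * R), derivable f p ((0, 1) : R * R),
        {for p, continuous (dx f)} & {for p, continuous (dy f)}].

Definition jacobian_det (R : realType) (P Q : R * R -> R) (p : R * R) : R :=
  dx P p * dy Q p - dy P p * dx Q p.

Definition non_singular_on (R : realType) (S : set (R * R)) (P Q : R * R -> R) : Prop :=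
  forall p, S p -> jacobian_det P Q p != 0.

Definition level_set (R : realType) (S : set (R * R)) (f : R * R -> R) (c : R) : set (R * R) :=
  [set p | S p /\ f p = c].

(* Main.v *)
Require Import Defs.
From HB Require Import structures.
From mathcomp Require Import all_boot all_order all_algebra.
From mathcomp Require Import all_classical all_reals all_analysis.
From mathcomp Require Import ring lra.
Import Order.TTheory GRing.Theory Num.Theory.
Import numFieldNormedType.Exports.
Import Num.Def.
Local Open Scope classical_set_scope.
Local Open Scope ring_scope.

Lemma clopen_conn {T : topologicalType} (A S : set T) :
  connected A -> S `<=` A -> S !=set0 ->
  (forall x, S x -> nbhs x (~` A `|` S)) ->
  (forall x, A x -> closure S x -> S x) -> S = A.
Proof.
move=> cA SA S0 Sop Scl; apply: cA => //.
- exists (interior (~` A `|` S)); first exact: open_interior.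
  apply/seteqP; split=> x.
  + by move=> Sx; split; [exact: SA | exact: Sop].
  + by move=> [Ax /interior_subset [//|]].
- exists (closure S); first exact: closed_closure.
  apply/seteqP; split=> x.
  + by move=> Sx; split; [exact: SA | exact: subset_closure].
  + by move=> [Ax cx]; exact: Scl.
Qed.

Section S.
Variable R : realType.
Implicit Types f : R * R -> R.

Lemma ballR (x e y : R) : ball x e y = (`|x - y| < e).
Proof. by rewrite -ball_normE. Qed.
Lemma ballRR (x y : R * R) e : ball x e y = (ball x.1 e y.1 /\ ball x.2 e y.2).
Proof. by []. Qed.

Lemma nbhs_box (z : R * R) (P : set (R * R)) r : 0 < r ->
  (forall w, `|z.1 - w.1| < r -> `|z.2 - w.2| < r -> P w) -> nbhs z P.
Proof.
move=> r0 H; exists (ball z.1 r, ball z.2 r); first by split; apply: nbhsx_ballx.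
by move=> [w1 w2] [/= h1 h2]; apply: H; rewrite -ballR.
Qed.

Lemma nbhs_boxP (z : R * R) (P : set (R * R)) : nbhs z P ->
  exists2 r, 0 < r & forall w, `|z.1 - w.1| < r -> `|z.2 - w.2| < r -> P w.
Proof.
case=> [[A B]] /= [/nbhs_ballP [r1 r10 H1] /nbhs_ballP [r2 r20 H2]] sub.
exists (minr r1 r2); first by rewrite lt_min r10 r20.
case=> w1 w2 /= h1 h2.
apply: sub; split => /=.
  by apply: H1; rewrite ballR; apply: lt_le_trans h1 _; rewrite ge_min lexx.
by apply: H2; rewrite ballR; apply: lt_le_trans h2 _; rewrite ge_min lexx orbT.
Qed.

Lemma absltP (x e : R) : `|x| < e -> -e < x /\ x < e.
Proof. by rewrite ltr_norml => /andP. Qed.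
Lemma absltI (x e : R) : -e < x -> x < e -> `|x| < e.
Proof. by move=> h1 h2; rewrite ltr_norml h1 h2. Qed.

Lemma dx_is_derive f (p : R * R) : derivable f p ((1, 0) : R * R) ->
  is_derive p.1 1 (fun s => f (s, p.2)) (dx f p).
Proof.
move=> d.
have E : (fun h : R => h^-1 *: ((f \o shift p) (h *: ((1, 0) : R * R)) - f p)) =
   (fun h : R => h^-1 *: (((fun s => f (s, p.2)) \o shift p.1) (h *: 1) - f (p.1, p.2))).
  apply/funext => h; case: p {d} => a b /=.
  congr (_ *: (f (_, _) - _)); rewrite /= ?scaler0 ?mulr0 ?add0r //.
apply: DeriveDef.
  by move: d; rewrite /derivable E.
by rewrite /dx /derive E; case: p {E d}.
Qed.

Lemma dy_is_derive f (p : R * R) : derivable f p ((0, 1) : R * R) ->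
  is_derive p.2 1 (fun s => f (p.1, s)) (dy f p).
Proof.
move=> d.
have E : (fun h : R => h^-1 *: ((f \o shift p) (h *: ((0, 1) : R * R)) - f p)) =
   (fun h : R => h^-1 *: (((fun s => f (p.1, s)) \o shift p.2) (h *: 1) - f (p.1, p.2))).
  apply/funext => h; case: p {d} => a b /=.
  congr (_ *: (f (_, _) - _)); rewrite /= ?scaler0 ?mulr0 ?add0r //.
apply: DeriveDef.
  by move: d; rewrite /derivable E.
by rewrite /dy /derive E; case: p {E d}.
Qed.

Lemma mvt_ball (phi dphi : R -> R) (z d a b : R) :
  `|a - z| < d -> `|b - z| < d ->
  (forall x, `|x - z| < d -> is_derive x 1 phi (dphi x)) ->
  exists c, `|c - z| < d /\ phi b - phi a = dphi c * (b - a).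
Proof.
wlog ab : a b / a <= b.
  move=> H ha hb hd; have [/H|/ltW ba] := leP a b; first exact.
  have [c [hc e]] := H b a ba hb ha hd.
  by exists c; split => //; rewrite -[LHS]opprB e -mulrN opprB.
move=> /absltP [ha1 ha2] /absltP [hb1 hb2] hd.
have inb x : a <= x <= b -> `|x - z| < d.
  by move=> /andP [h1 h2]; apply: absltI; lra.
have hd' : forall x, x \in `]a, b[ -> is_derive x 1 phi (dphi x).
  by move=> x; rewrite in_itv /= => /andP [h1 h2]; apply: hd; apply: inb; rewrite !ltW.
have hc : {within `[a, b], continuous phi}.
  apply: derivable_within_continuous => x; rewrite in_itv /= => xin.
  by have := hd x (inb x xin) => -[].
have [c] := MVT_segment ab hd' hc.
rewrite in_itv /= => xin e.
by exists c; split => //; apply: inb.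
Qed.

Variable I : set R.
Hypothesis oI : open I.
Local Notation S := (strip I).

Lemma strip_ball z : S z -> exists2 d, 0 < d & ball z d `<=` S.
Proof.
move=> [z1 _].
have /nbhs_ballP [d d0 Hd] : nbhs z.1 I by apply: oI.
by exists d => // w [w1 _]; split => //; apply: Hd.
Qed.

Lemma C1_dx f p : C1_on S f -> S p -> derivable f p ((1, 0) : R * R).
Proof. by move=> C /C []. Qed.
Lemma C1_dy f p : C1_on S f -> S p -> derivable f p ((0, 1) : R * R).
Proof. by move=> C /C []. Qed.
Lemma C1_cdx f p : C1_on S f -> S p -> {for p, continuous (dx f)}.
Proof. by move=> C /C []. Qed.
Lemma C1_cdy f p : C1_on S f -> S p -> {for p, continuous (dy f)}.
Proof. by move=> C /C []. Qed.

Lemma mvt2 f z d a b : ball z d `<=` S -> C1_on S f ->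
  ball z d a -> ball z d b ->
  exists xi eta, [/\ ball z d (xi, b.2), ball z d (a.1, eta) &
    f b - f a = dx f (xi, b.2) * (b.1 - a.1) + dy f (a.1, eta) * (b.2 - a.2)].
Proof.
move=> zS C [a1 a2] [b1 b2].
have inball x y : `|x - z.1| < d -> `|y - z.2| < d -> ball z d (x, y).
  by move=> h1 h2; split; rewrite /= ballR distrC.
move: a1 a2 b1 b2; rewrite !ballR ![`|z.1 - _|]distrC ![`|z.2 - _|]distrC => a1 a2 b1 b2.
have [xi [xi1 exi]] := @mvt_ball (fun s => f (s, b.2)) (fun s => dx f (s, b.2)) z.1 d a.1 b.1 a1 b1
  (fun x hx => @dx_is_derive f _ (@C1_dx f _ C (zS _ (inball _ _ hx b2)))).
have [eta [eta1 eeta]] := @mvt_ball (fun s => f (a.1, s)) (fun s => dy f (a.1, s)) z.2 d a.2 b.2 a2 b2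
  (fun x hx => @dy_is_derive f _ (@C1_dy f _ C (zS _ (inball _ _ a1 hx)))).
exists xi, eta; split; [exact: inball | exact: inball |].
rewrite -exi -eeta; clear; case: a => ? ?; case: b => ? ? /=.
by rewrite addrA subrK.
Qed.

Lemma bound2 {A B u v M k : R} : `|A| <= M -> `|B| <= M -> `|u| <= k -> `|v| <= k ->
  `|A * u + B * v| <= 2 * M * k.
Proof.
move=> hA hB hu hv.
have M0 : 0 <= M by apply: le_trans hA.
have k0 : 0 <= k by apply: le_trans hu.
apply: (le_trans (ler_normD _ _)); rewrite !normrM.
have h1 : `|A| * `|u| <= M * k by apply: ler_pM.
have h2 : `|B| * `|v| <= M * k by apply: ler_pM.
lra.
Qed.

Lemma norm_near1 (a b : R) : `|a - b| < 1 -> `|b| <= `|a| + 1.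
Proof.
move=> h; have -> : b = a - (a - b) by rewrite opprB addrC subrK.
by apply: le_trans (ler_normB _ _) _; rewrite lerD2l ltW.
Qed.

Lemma C1_cont f z : C1_on S f -> S z -> {for z, continuous f}.
Proof.
move=> C zS.
have [d0 d00 Hd0] := @strip_ball z zS.
have /nbhs_ballP [d1 d10 Hd1] : \forall w \near z,
    `|dx f z - dx f w| < 1 /\ `|dy f z - dy f w| < 1.
  near=> w; split; near: w.
    by apply: cvgr_dist_lt; [exact: (@C1_cdx f z C zS) | exact: ltr01].
  by apply: cvgr_dist_lt; [exact: (@C1_cdy f z C zS) | exact: ltr01].
set d := minr d0 d1.
have d0' : 0 < d by rewrite lt_min d00 d10.
have sub0 : ball z d `<=` S by apply: subset_trans Hd0; apply: le_ball; rewrite ge_min lexx.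
have sub1 : ball z d `<=` ball z d1 by apply: le_ball; rewrite ge_min lexx orbT.
set M := `|dx f z| + `|dy f z| + 1.
have M0 : 0 < M by rewrite /M; have := normr_ge0 (dx f z); have := normr_ge0 (dy f z); lra.
apply/cvgrPdist_lt => e e0.
have r0 : 0 < minr d (e / (4 * M)).
  by rewrite lt_min d0' /=; apply: divr_gt0 => //; lra.
apply: (@nbhs_box z _ _ r0) => w w1 w2.
have wb : ball z (minr d (e / (4 * M))) w by rewrite ballRR !ballR.
have wd : ball z d w by apply: le_ball wb; rewrite ge_min lexx.
have [xi [eta [hxi heta E]]] := @mvt2 f z d z w sub0 C (ballxx _ d0') wd.
rewrite distrC E.
have rb : minr d (e / (4 * M)) <= e / (4 * M) by rewrite ge_min lexx orbT.
have hu : `|w.1 - z.1| <= e / (4 * M) by rewrite distrC; apply: ltW; apply: lt_le_trans rb.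
have hv : `|w.2 - z.2| <= e / (4 * M) by rewrite distrC; apply: ltW; apply: lt_le_trans rb.
have hA : `|dx f (xi, w.2)| <= M.
  have [/norm_near1 + _] := Hd1 _ (sub1 _ hxi); rewrite /M => h.
  by have := normr_ge0 (dy f z); lra.
have hB : `|dy f (z.1, eta)| <= M.
  have [_ /norm_near1] := Hd1 _ (sub1 _ heta); rewrite /M => h.
  by have := normr_ge0 (dx f z); lra.
have := bound2 hA hB hu hv.
have -> : 2 * M * (e / (4 * M)) = e / 2.
  have M0' : M != 0 by apply: lt0r_neq0.
  by field.
lra.
Unshelve. all: by end_near.
Qed.
Lemma prod_err {A A0 D D0 e : R} : `|A0 - A| < e -> `|D0 - D| < e -> e <= 1 ->
  `|A * D - A0 * D0| <= e * (`|A0| + `|D0| + 1).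
Proof.
move=> hA hD e1.
have -> : A * D - A0 * D0 = A0 * (D - D0) + (A - A0) * D0 + (A - A0) * (D - D0) by ring.
rewrite distrC in hA; rewrite distrC in hD.
have e0 : 0 <= e by apply: le_trans (ltW hA); exact: normr_ge0.
have h1 : `|A0| * `|D - D0| <= `|A0| * e by apply: ler_wpM2l => //; apply: ltW.
have h2 : `|A - A0| * `|D0| <= e * `|D0| by apply: ler_wpM2r => //; apply: ltW.
have h3 : `|A - A0| * `|D - D0| <= e * e by apply: ler_pM => //; apply: ltW.
have h4 : e * e <= e * 1 by apply: ler_wpM2l.
apply: le_trans (ler_normD _ _) _; apply: le_trans (lerD (ler_normD _ _) (lexx _)) _.
rewrite !normrM; nra.
Qed.

Lemma det_near {A B C D A0 B0 C0 D0 e : R} : e <= 1 ->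
  `|A0 - A| < e -> `|B0 - B| < e -> `|C0 - C| < e -> `|D0 - D| < e ->
  e * (`|A0| + `|B0| + `|C0| + `|D0| + 2) <= `|A0 * D0 - B0 * C0| / 2 ->
  A0 * D0 - B0 * C0 != 0 -> A * D - B * C != 0.
Proof.
move=> e1 hA hB hC hD hK hJ.
have := prod_err hA hD e1; have := prod_err hB hC e1 => h1 h2.
apply/negP => /eqP E.
have : `|A0 * D0 - B0 * C0| <= e * (`|A0| + `|B0| + `|C0| + `|D0| + 2).
  have -> : A0 * D0 - B0 * C0 = (B * C - B0 * C0) - (A * D - A0 * D0) + (A * D - B * C) by ring.
  rewrite E addr0.
  apply: le_trans (ler_normB _ _) _; lra.
have := normr_gt0 (A0 * D0 - B0 * C0); rewrite hJ => /esym.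
lra.
Qed.

Lemma loc_inj P Q z : C1_on S P -> C1_on S Q -> S z -> jacobian_det P Q z != 0 ->
  exists2 d, 0 < d & ball z d `<=` S /\
    (forall a b, ball z d a -> ball z d b -> P a = P b -> Q a = Q b -> a = b).
Proof.
move=> CP CQ zS hJ.
have [d0 d00 Hd0] := @strip_ball z zS.
set K := `|dx P z| + `|dy P z| + `|dx Q z| + `|dy Q z| + 2.
have K0 : 0 < K.
  rewrite /K; have := normr_ge0 (dx P z); have := normr_ge0 (dy P z).
  have := normr_ge0 (dx Q z); have := normr_ge0 (dy Q z); lra.
set e := minr 1 (`|jacobian_det P Q z| / 2 / K).
have e0 : 0 < e.
  by rewrite lt_min ltr01 /=; apply: divr_gt0 => //; apply: divr_gt0; rewrite ?normr_gt0.
have /nbhs_ballP [d1 d10 Hd1] : \forall w \near z, [/\ `|dx P z - dx P w| < e,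
    `|dy P z - dy P w| < e, `|dx Q z - dx Q w| < e & `|dy Q z - dy Q w| < e].
  near=> w; split; near: w; apply: cvgr_dist_lt => //.
  - exact: (@C1_cdx P z CP zS).
  - exact: (@C1_cdy P z CP zS).
  - exact: (@C1_cdx Q z CQ zS).
  - exact: (@C1_cdy Q z CQ zS).
set d := minr d0 d1.
have d0' : 0 < d by rewrite lt_min d00 d10.
have sub0 : ball z d `<=` S by apply: subset_trans Hd0; apply: le_ball; rewrite ge_min lexx.
have sub1 : ball z d `<=` ball z d1 by apply: le_ball; rewrite ge_min lexx orbT.
exists d => //; split => // a b ha hb hP hQ.
have [x1 [y1 [hx1 hy1 E1]]] := @mvt2 P z d a b sub0 CP ha hb.
have [x2 [y2 [hx2 hy2 E2]]] := @mvt2 Q z d a b sub0 CQ ha hb.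
have [hA _ _ _] := Hd1 _ (sub1 _ hx1).
have [_ hB _ _] := Hd1 _ (sub1 _ hy1).
have [_ _ hC _] := Hd1 _ (sub1 _ hx2).
have [_ _ _ hD] := Hd1 _ (sub1 _ hy2).
have e1 : e <= 1 by rewrite ge_min lexx.
have hK : e * K <= `|jacobian_det P Q z| / 2.
  have : e <= `|jacobian_det P Q z| / 2 / K by rewrite ge_min lexx orbT.
  by rewrite ler_pdivlMr.
have hdet := det_near e1 hA hB hC hD hK hJ.
move: E1 E2; rewrite hP hQ !subrr.
set A := dx P _; set B := dy P _; set C := dx Q _; set D := dy Q _.
set u := b.1 - a.1; set v := b.2 - a.2 => E1 E2.
have hu : u * (A * D - B * C) = 0.
  have -> : u * (A * D - B * C) = D * (A * u + B * v) - B * (C * u + D * v) by ring.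
  by rewrite -E1 -E2 !mulr0 subrr.
have hv : v * (A * D - B * C) = 0.
  have -> : v * (A * D - B * C) = A * (C * u + D * v) - C * (A * u + B * v) by ring.
  by rewrite -E1 -E2 !mulr0 subrr.
move/eqP: hu; rewrite mulf_eq0 (negbTE hdet) orbF subr_eq0 => /eqP h1.
move/eqP: hv; rewrite mulf_eq0 (negbTE hdet) orbF subr_eq0 => /eqP h2.
by rewrite (surjective_pairing a) (surjective_pairing b) h1 h2.
Unshelve. all: by end_near.
Qed.

Lemma cvgrd {T : Type} {F : set_system T} {FF : Filter F} {f : T -> R} {y : R} :
  f @ F --> y -> forall eps : R, 0 < eps -> \forall t \near F, `|y - f t| < eps.
Proof. by move=> h eps e0; apply: cvgr_dist_lt. Qed.

Lemma within_itv (f : R -> R) (a b : R) :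
  (forall s, a <= s <= b -> {for s, continuous f}) -> {within `[a, b], continuous f}.
Proof.
move=> H; apply: continuous_in_subspaceT => s hs.
by rewrite inE /= in_itv /= in hs; apply: H.
Qed.

Lemma cont_pair (a b : R -> R) t : {for t, continuous a} -> {for t, continuous b} ->
  {for t, continuous (fun x => (a x, b x))}.
Proof. by move=> ha hb; exact: (cvg_pair ha hb). Qed.

Lemma cont_slice2 (phi : R * R -> R) t s : {for (t, s), continuous phi} ->
  {for s, continuous (fun s => phi (t, s))}.
Proof.
move=> h; apply: (@continuous_comp _ _ _ (fun s => (t, s)) phi s) => //.
by apply: cont_pair; [exact: cvg_cst | exact: cvg_id].
Qed.

Lemma graph (phi : R * R -> R) (t0 s0 c e : R) :
  0 < e -> phi (t0, s0) = c ->
  (forall t s, `|t - t0| < e -> `|s - s0| < e -> {for (t, s), continuous phi}) ->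
  (forall t s1 s2, `|t - t0| < e -> `|s1 - s0| < e -> `|s2 - s0| < e -> s1 < s2 ->
     phi (t, s1) < phi (t, s2)) ->
  exists2 dl, 0 < dl & exists g : R -> R, g t0 = s0 /\
    forall t, `|t - t0| < dl ->
      [/\ `|g t - s0| < e, phi (t, g t) = c & {for t, continuous g}].
Proof.
move=> e0 phic cphi mono.
have uniq t s1 s2 : `|t - t0| < e -> `|s1 - s0| < e -> `|s2 - s0| < e ->
    phi (t, s1) = c -> phi (t, s2) = c -> s1 = s2.
  move=> ht h1 h2 p1 p2; have [lt12|lt21|//] := ltgtP s1 s2.
    by have := mono _ _ _ ht h1 h2 lt12; rewrite p1 p2 ltxx.
  by have := mono _ _ _ ht h2 h1 lt21; rewrite p1 p2 ltxx.
have monole t s1 s2 : `|t - t0| < e -> `|s1 - s0| < e -> `|s2 - s0| < e -> s1 <= s2 ->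
    phi (t, s1) <= phi (t, s2).
  move=> ht h1 h2; rewrite le_eqVlt => /orP [/eqP -> //| lt12].
  by apply: ltW; apply: mono.
set e2 := e / 2.
have e20 : 0 < e2 by apply: divr_gt0.
have e2e : e2 < e by rewrite /e2; lra.
have e2E : e2 = e / 2 by [].
set Z := fun t => [set s | `|s - s0| < e /\ phi (t, s) = c].
set g := fun t => xget s0 (Z t).
have sep t s (k : R) : `|t - t0| < e -> `|s - s0| < e ->
    (phi (t, s) < k -> \forall t' \near t, phi (t', s) < k) /\
    (k < phi (t, s) -> \forall t' \near t, k < phi (t', s)).
  move=> ht hs; have ct := cphi _ _ ht hs.
  have ct' : {for t, continuous (fun t' => phi (t', s))}.
    apply: (@continuous_comp _ _ _ (fun t' => (t', s)) phi t) => //.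
    by apply: cont_pair; [exact: cvg_id | exact: cvg_cst].
  split => hk.
    have : 0 < k - phi (t, s) by rewrite subr_gt0.
    move=> /(cvgrd ct').
    apply: filterS => t' /absltP [h1 h2]; lra.
  have : 0 < phi (t, s) - k by rewrite subr_gt0.
  move=> /(cvgrd ct').
  apply: filterS => t' /absltP [h1 h2]; lra.
have in_e2 s : `|s - s0| <= e2 -> `|s - s0| < e by move=> h; apply: le_lt_trans h e2e.
have t0e : `|t0 - t0| < e by rewrite subrr normr0.
have hlo : `|(s0 - e2) - s0| < e by apply: in_e2; rewrite addrAC subrr add0r normrN gtr0_norm.
have hhi : `|(s0 + e2) - s0| < e by apply: in_e2; rewrite addrAC subrr add0r gtr0_norm.
have hs0 : `|s0 - s0| < e by rewrite subrr normr0.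
have lo : phi (t0, s0 - e2) < c by rewrite -phic; apply: mono => //; lra.
have hi : c < phi (t0, s0 + e2) by rewrite -phic; apply: mono => //; lra.
have /nbhs_ballP [dl dl0 Hdl] : \forall t \near t0,
    [/\ phi (t, s0 - e2) < c, c < phi (t, s0 + e2) & `|t - t0| < e].
  near=> t; split; near: t.
  - by apply: (sep _ _ _ t0e hlo).1.
  - by apply: (sep _ _ _ t0e hhi).2.
  - by apply/nbhs_ballP; exists e => // t; rewrite ballR distrC.
have Hdl' t : `|t - t0| < dl ->
    [/\ phi (t, s0 - e2) < c, c < phi (t, s0 + e2) & `|t - t0| < e].
  by move=> h; apply: Hdl; rewrite ballR distrC.
have exZ t : `|t - t0| < dl -> exists s, `|s - s0| <= e2 /\ phi (t, s) = c.
  move=> /Hdl' [h1 h2 h3].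
  have le12 : s0 - e2 <= s0 + e2 by lra.
  have cw : {within `[s0 - e2, s0 + e2], continuous (fun s => phi (t, s))}.
    apply: within_itv => s /andP [s1 s2].
    apply: cont_slice2; apply: cphi => //; apply: in_e2.
    by rewrite ler_norml; apply/andP; split; lra.
  have mm : minr (phi (t, s0 - e2)) (phi (t, s0 + e2)) <= c <=
            maxr (phi (t, s0 - e2)) (phi (t, s0 + e2)).
    by apply/andP; split; [rewrite ge_min (ltW h1) | rewrite le_max (ltW h2) orbT].
  have [s] := IVT le12 cw mm; rewrite in_itv /= => /andP [s1 s2] hs.
  by exists s; split => //; rewrite ler_norml; apply/andP; split; lra.
have gZ t : `|t - t0| < dl -> [/\ `|g t - s0| < e, phi (t, g t) = c & `|g t - s0| <= e2].
  move=> ht; have [s [hs1 hs2]] := exZ t ht.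
  have [hg1 hg2] : Z t (g t) by apply: xgetPex; exists s; split => //; apply: in_e2.
  have he : `|t - t0| < e by have [] := Hdl' t ht.
  split => //; rewrite (uniq t (g t) s he hg1 (in_e2 _ hs1) hg2 hs2) //.
have gt0 : g t0 = s0.
  have t0dl : `|t0 - t0| < dl by rewrite subrr normr0.
  have [h1 h2 _] := gZ t0 t0dl.
  exact: uniq t0e h1 hs0 h2 phic.
exists dl => //; exists g; split => // t ht.
have [hg1 hg2 hg3] := gZ t ht.
split => //.
have hte : `|t - t0| < e by have [] := Hdl' t ht.
apply/cvgrPdist_lt => eps eps0.
set s := g t.
set ep := minr eps e2 / 2.
have ep0 : 0 < ep by apply: divr_gt0 => //; rewrite lt_min eps0 e20.
have epe : ep <= e2 / 2 by rewrite ler_pM2r // ?invr_gt0 // ge_min lexx orbT.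
have epeps : ep < eps.
  have : minr eps e2 <= eps by rewrite ge_min lexx.
  rewrite /ep; lra.
have sm : `|(s - ep) - s0| < e.
  move: (hg3 : `|s - s0| <= e2); rewrite ler_norml => /andP [a1 a2]; rewrite ltr_norml; apply/andP; split; lra.
have sp : `|(s + ep) - s0| < e.
  move: (hg3 : `|s - s0| <= e2); rewrite ler_norml => /andP [a1 a2]; rewrite ltr_norml; apply/andP; split; lra.
have lo' : phi (t, s - ep) < c by rewrite -hg2 -/s; apply: mono => //; lra.
have hi' : c < phi (t, s + ep) by rewrite -hg2 -/s; apply: mono => //; lra.
near=> t'.
have ht' : `|t' - t0| < dl.
  near: t'; apply/nbhs_ballP; exists (dl - `|t - t0|) => /=; first by rewrite subr_gt0.
  move=> t' hb; have : ball t (dl - `|t - t0|) t' := hb.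
  rewrite ballR => /absltP [a1 a2].
  have n1 : t - t0 <= `|t - t0| := ler_norm _.
  have n2 : - (t - t0) <= `|t - t0| by rewrite -normrN; exact: ler_norm.
  by apply: absltI; lra.
have [g1 g2 g3] := gZ t' ht'.
have ht'e : `|t' - t0| < e by have [] := Hdl' t' ht'.
have l1 : phi (t', s - ep) < c by near: t'; exact: (sep _ _ _ hte sm).1.
have l2 : c < phi (t', s + ep) by near: t'; exact: (sep _ _ _ hte sp).2.
have a1 : s - ep < g t'.
  rewrite ltNge; apply/negP => h.
  by have := monole _ _ _ ht'e g1 sm h; rewrite g2; lra.
have a2 : g t' < s + ep.
  rewrite ltNge; apply/negP => h.
  by have := monole _ _ _ ht'e sp g1 h; rewrite g2; lra.
by apply: absltI; lra.
Unshelve. all: by end_near.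
Qed.

Definition mk (sw : bool) (t s : R) : R * R := if sw then (s, t) else (t, s).
Definition tc (sw : bool) (w : R * R) : R := if sw then w.2 else w.1.
Definition sc (sw : bool) (w : R * R) : R := if sw then w.1 else w.2.
Definition dsP (sw : bool) f (w : R * R) : R := if sw then dx f w else dy f w.

Lemma mk_tc_sc sw w : mk sw (tc sw w) (sc sw w) = w.
Proof. by case: sw; case: w. Qed.
Lemma tc_mk sw t s : tc sw (mk sw t s) = t.
Proof. by case: sw. Qed.
Lemma sc_mk sw t s : sc sw (mk sw t s) = s.
Proof. by case: sw. Qed.
Lemma ball_mk sw z e t s : `|t - tc sw z| < e -> `|s - sc sw z| < e -> ball z e (mk sw t s).
Proof.
by case: sw => h1 h2; split; rewrite /= ballR distrC.
Qed.
Lemma box_tc_sc sw z r w : `|z.1 - w.1| < r -> `|z.2 - w.2| < r ->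
  `|tc sw w - tc sw z| < r /\ `|sc sw w - sc sw z| < r.
Proof. by case: sw => h1 h2; rewrite /tc /sc /= !(distrC _ z.1) !(distrC _ z.2). Qed.
Lemma cont_mk sw (a b : R -> R) x : {for x, continuous a} -> {for x, continuous b} ->
  {for x, continuous (fun x => mk sw (a x) (b x))}.
Proof. by case: sw => ha hb; apply: cont_pair. Qed.
Lemma mk_inj sw t1 s1 t2 s2 : mk sw t1 s1 = mk sw t2 s2 -> t1 = t2.
Proof. by move=> /(congr1 (tc sw)); rewrite !tc_mk. Qed.

Lemma ds_is_derive sw f t s : C1_on S f -> S (mk sw t s) ->
  is_derive s 1 (fun s => f (mk sw t s)) (dsP sw f (mk sw t s)).
Proof.
case: sw => C hS; rewrite /mk /dsP in hS *.
  exact: (@dx_is_derive f (s, t) (@C1_dx f _ C hS)).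
exact: (@dy_is_derive f (t, s) (@C1_dy f _ C hS)).
Qed.

Lemma C1_cds sw f p : C1_on S f -> S p -> {for p, continuous (dsP sw f)}.
Proof. by case: sw => C hp; rewrite /dsP; [exact: (@C1_cdx f p C hp) | exact: (@C1_cdy f p C hp)]. Qed.

Lemma cont_mk2 sw (x : R * R) : {for x, continuous (fun ts : R * R => mk sw ts.1 ts.2)}.
Proof.
case: sw; rewrite /mk.
  exact: (cvg_pair cvg_snd cvg_fst).
have -> : (fun ts : R * R => (ts.1, ts.2)) = id by apply/funext; case.
exact: cvg_id.
Qed.

Lemma chart P Q c z : C1_on S P -> C1_on S Q -> non_singular_on S P Q ->
  level_set S P c z ->
  exists2 r, 0 < r & exists tau : R -> R * R, tau (Q z) = z /\
   (forall v, `|v - Q z| < r ->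
      [/\ level_set S P c (tau v), Q (tau v) = v & {for v, continuous tau}]) /\
   nbhs z (fun w => level_set S P c w -> exists2 v, `|v - Q z| < r & tau v = w).
Proof.
move=> CP CQ NS [zS Pz].
have [dF dF0 [subF injF]] := @loc_inj P Q z CP CQ zS (NS z zS).
have [sw dsz] : exists sw, dsP sw P z != 0.
  case: (eqVneq (dy P z) 0) => h; last by exists false.
  exists true; rewrite /dsP; apply/negP => /eqP h'; have := NS z zS.
  by rewrite /jacobian_det h h' !mul0r subrr eqxx.
set sg : R := if 0 < dsP sw P z then 1 else -1.
have normsg : `|sg| = 1 by rewrite /sg; case: ifP => _; rewrite ?normrN normr1.
have sgabs : sg * dsP sw P z = `|dsP sw P z|.
  rewrite /sg; case: ifP => h; first by rewrite mul1r gtr0_norm.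
  rewrite mulN1r ltr0_norm //; rewrite lt_def eq_sym dsz /=.
  by move/negbT: h; rewrite -leNgt.
have sg0 : sg != 0 by rewrite -normr_eq0 normsg oner_neq0.
have /nbhs_ballP [d2 d20 Hd2] :
    \forall w \near z, `|dsP sw P z - dsP sw P w| < `|dsP sw P z|.
  have dpos : 0 < `|dsP sw P z| by rewrite normr_gt0.
  near=> w; near: w; apply: cvgr_dist_lt => //.
  exact: (@C1_cds sw P z CP zS).
have pos w : ball z d2 w -> 0 < sg * dsP sw P w.
  move=> /Hd2 h.
  have h2 : sg * (dsP sw P z - dsP sw P w) <= `|dsP sw P z - dsP sw P w|.
    by apply: le_trans (ler_norm _) _; rewrite normrM normsg mul1r.
  rewrite mulrBr in h2; lra.
set e := minr dF d2.
have e0 : 0 < e by rewrite lt_min dF0 d20.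
have subeF : ball z e `<=` ball z dF by apply: le_ball; rewrite ge_min lexx.
have sube2 : ball z e `<=` ball z d2 by apply: le_ball; rewrite ge_min lexx orbT.
set t0 := tc sw z; set s0 := sc sw z.
have inB t s : `|t - t0| < e -> `|s - s0| < e -> ball z e (mk sw t s).
  exact: ball_mk.
have inS t s : `|t - t0| < e -> `|s - s0| < e -> S (mk sw t s).
  by move=> h1 h2; apply: subF; apply: subeF; apply: inB.
set phi := fun ts : R * R => sg * P (mk sw ts.1 ts.2).
have mono t s1 s2 : `|t - t0| < e -> `|s1 - s0| < e -> `|s2 - s0| < e -> s1 < s2 ->
    phi (t, s1) < phi (t, s2).
  move=> ht h1 h2 lt12.
  have [xi [hxi E]] := @mvt_ball (fun s => P (mk sw t s)) (fun s => dsP sw P (mk sw t s))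
    s0 e s1 s2 h1 h2 (fun x hx => @ds_is_derive sw P t x CP (inS _ _ ht hx)).
  rewrite -subr_gt0 /phi /= -mulrBr E mulrA; apply: mulr_gt0; last by rewrite subr_gt0.
  by apply: pos; apply: sube2; apply: inB.
have phic : phi (t0, s0) = sg * c by rewrite /phi /= /t0 /s0 mk_tc_sc Pz.
have cphi t s : `|t - t0| < e -> `|s - s0| < e -> {for (t, s), continuous phi}.
  move=> ht hs; apply: cvgM; first exact: cvg_cst.
  apply: (@continuous_comp _ _ _ (fun ts : R * R => mk sw ts.1 ts.2) P (t, s)).
    exact: cont_mk2.
  exact: (@C1_cont P _ CP (inS _ _ ht hs)).
have [dl dl0 [g [gt0 Hg]]] := @graph phi t0 s0 (sg * c) e e0 phic cphi mono.
set dl' := minr dl e.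
have dl'0 : 0 < dl' by rewrite lt_min dl0 e0.
have Hg' t : `|t - t0| < dl' ->
    [/\ `|t - t0| < e, `|g t - s0| < e, P (mk sw t (g t)) = c & {for t, continuous g}].
  move=> ht.
  have htl : `|t - t0| < dl by apply: lt_le_trans ht _; rewrite ge_min lexx.
  have hte : `|t - t0| < e by apply: lt_le_trans ht _; rewrite ge_min lexx orbT.
  have [h1 h2 h3] := Hg t htl; split => //.
  by apply: (mulfI sg0); move: h2; rewrite /phi.
set h := fun t => Q (mk sw t (g t)).
have hcont t : `|t - t0| < dl' -> {for t, continuous h}.
  move=> ht; have [te ge _ cg] := Hg' t ht.
  apply: (@continuous_comp _ _ _ (fun t => mk sw t (g t)) Q t).
    by apply: cont_mk => //; exact: cvg_id.
  exact: (@C1_cont Q _ CQ (inS _ _ te ge)).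
have hinj t1 t2 : `|t1 - t0| < dl' -> `|t2 - t0| < dl' -> h t1 = h t2 -> t1 = t2.
  move=> h1 h2 e12; have [te1 ge1 P1 _] := Hg' _ h1; have [te2 ge2 P2 _] := Hg' _ h2.
  apply: (@mk_inj sw _ (g t1) _ (g t2)); apply: injF.
  - by apply: subeF; apply: inB.
  - by apply: subeF; apply: inB.
  - by rewrite P1 P2.
  - exact: e12.
set hinv := fun v => xget t0 [set t | `|t - t0| < dl' /\ h t = v].
have hK t : `|t - t0| < dl' -> hinv (h t) = t.
  move=> ht; have [h1 h2] : `|hinv (h t) - t0| < dl' /\ h (hinv (h t)) = h t :=
    @xgetPex _ t0 [set t' | `|t' - t0| < dl' /\ h t' = h t] (ex_intro _ t (conj ht erefl)).
  exact: hinj.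
have t0dl : `|t0 - t0| < dl' by rewrite subrr normr0.
have neart0 : \forall t \near t0, `|t - t0| < dl'.
  by apply/nbhs_ballP; exists dl' => // t; rewrite ballR distrC.
have nearK : {near t0, cancel h hinv}.
  by near=> t; apply: hK; near: t; exact: neart0.
have nearC : {near t0, continuous h}.
  by near=> t; apply: hcont; near: t; exact: neart0.
have [cinv cK] := near_can_continuousAcan_sym nearK nearC.
have hQz : h t0 = Q z by rewrite /h gt0 /t0 /s0 mk_tc_sc.
have hinv0 : hinv (h t0) = t0 by apply: hK.
have cinv0 : {for h t0, continuous hinv} := nbhs_singleton cinv.
have /nbhs_ballP [r r0 Hr] : \forall v \near h t0,
    [/\ {for v, continuous hinv}, h (hinv v) = v & `|hinv v - t0| < dl'].
  near=> v; split.
  - by near: v; exact: cinv.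
  - by near: v; exact: cK.
  - rewrite distrC -[X in `|X - _|]hinv0; near: v.
    by apply: cvgr_dist_lt => //; exact: cinv0.
have Hr' v : `|v - Q z| < r ->
    [/\ {for v, continuous hinv}, h (hinv v) = v & `|hinv v - t0| < dl'].
  by move=> hv; apply: Hr; rewrite ballR hQz distrC.
exists r => //; exists (fun v => mk sw (hinv v) (g (hinv v))).
split; first by rewrite -hQz hinv0 gt0 /t0 /s0 mk_tc_sc.
split.
  move=> v hv; have [cv hv' tv] := Hr' v hv; have [te ge Pe cg] := Hg' _ tv.
  split => //; first by split => //; apply: inS.
  apply: (@continuous_comp _ _ _ hinv (fun t => mk sw t (g t)) v) => //.
  by apply: cont_mk => //; exact: cvg_id.
have cQ := @C1_cont Q z CQ zS.
set rho := minr dl' e.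
have rho0 : 0 < rho by rewrite lt_min dl'0 e0.
near=> w => -[wS Pw].
have [ht hs] : `|tc sw w - t0| < rho /\ `|sc sw w - s0| < rho.
  near: w; apply: (@nbhs_box z _ rho rho0) => w h1 h2.
  exact: box_tc_sc.
have hQw : `|Q z - Q w| < r by near: w; apply: cvgr_dist_lt => //; exact: cQ.
have htd : `|tc sw w - t0| < dl' by apply: lt_le_trans ht _; rewrite ge_min lexx.
have hse : `|sc sw w - s0| < e by apply: lt_le_trans hs _; rewrite ge_min lexx orbT.
have [te ge Pe _] := Hg' _ htd.
have sg_eq : sc sw w = g (tc sw w).
  have p1 : phi (tc sw w, sc sw w) = sg * c by rewrite /phi /= mk_tc_sc Pw.
  have p2 : phi (tc sw w, g (tc sw w)) = sg * c by rewrite /phi /= Pe.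
  have [lt12|lt21|//] := ltgtP (sc sw w) (g (tc sw w)).
    by have := mono _ _ _ te hse ge lt12; rewrite p1 p2 ltxx.
  by have := mono _ _ _ te ge hse lt21; rewrite p1 p2 ltxx.
have wE : w = mk sw (tc sw w) (g (tc sw w)) by rewrite -sg_eq mk_tc_sc.
exists (Q w); first by rewrite distrC.
by rewrite [in Q w]wE -/(h (tc sw w)) hK // -wE.
Unshelve. all: by end_near.
Qed.

Definition is_sec P Q c (J : set R) (sig : R -> R * R) :=
  forall t, J t -> [/\ level_set S P c (sig t), Q (sig t) = t & {for t, continuous sig}].

Lemma itvI {J K : set R} : is_interval J -> is_interval K -> is_interval (J `&` K).
Proof. by move=> iJ iK x y [Jx Kx] [Jy Ky] z hz; split; [apply: (iJ x y) | apply: (iK x y)]. Qed.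

Lemma itvU {J K : set R} {t0 : R} : is_interval J -> is_interval K -> J t0 -> K t0 ->
  is_interval (J `|` K).
Proof.
move=> iJ iK Jt Kt x y Hx Hy z /andP [xz zy].
case: Hx => Hx; case: Hy => Hy.
- by left; apply: (iJ x y) => //; rewrite xz zy.
- have [zt|tz] := leP z t0.
    by left; apply: (iJ x t0) => //; rewrite xz zt.
  by right; apply: (iK t0 y) => //; rewrite (ltW tz) zy.
- have [zt|tz] := leP z t0.
    by right; apply: (iK x t0) => //; rewrite xz zt.
  by left; apply: (iJ t0 y) => //; rewrite (ltW tz) zy.
- by right; apply: (iK x y) => //; rewrite xz zy.
Qed.

Lemma itv_ball (v r : R) : is_interval [set x | `|x - v| < r].
Proof.
move=> x y /= /absltP [h1 h2] /absltP [h3 h4] z /andP [a b].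
by apply: absltI; lra.
Qed.

Lemma open_ballR (v r : R) : open [set x | `|x - v| < r].
Proof.
have -> : [set x | `|x - v| < r] = ball v r.
  by apply/funext => x; rewrite ballR distrC.
exact: ball_open.
Qed.

Lemma eq_of_close (x y : R * R) :
  (forall e, 0 < e -> exists w, ball x e w /\ ball y e w) -> x = y.
Proof.
move=> H.
suff key (a b : R) : (forall e, 0 < e -> `|a - b| < 2 * e) -> a = b.
  rewrite (surjective_pairing x) (surjective_pairing y); congr pair; apply: key => e e0;
  have [w [[h1 h2] [h3 h4]]] := H e e0; move: h1 h2 h3 h4; rewrite !ballR => h1 h2 h3 h4.
    have := ler_distD w.1 x.1 y.1; rewrite (distrC w.1); lra.
  have := ler_distD w.2 x.2 y.2; rewrite (distrC w.2); lra.
move=> Hab; apply/eqP; rewrite -subr_eq0 -normr_le0 leNgt; apply/negP => hpos.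
have h4 : 0 < `|a - b| / 4 by apply: divr_gt0.
by have := Hab _ h4; lra.
Qed.

Lemma cont_near_eq {f g : R -> R * R} {t : R} : (\forall t' \near t, f t' = g t') ->
  {for t, continuous g} -> {for t, continuous f}.
Proof.
move=> E cg; have ft : f t = g t := nbhs_singleton E.
move=> N; rewrite ft => /cg gN.
apply: filterS (filterI E gN) => t' [e1 h].
suff : N (f t') by []. by rewrite e1; exact: h.
Qed.

Lemma near_ball_cont {f : R -> R * R} {t e : R} : 0 < e -> {for t, continuous f} ->
  \forall t' \near t, ball (f t) e (f t').
Proof. by move=> e0 cf; apply: cf; apply: nbhsx_ballx. Qed.

Section Sec.
Variables (P Q : R * R -> R) (c : R).
Hypotheses (CP : C1_on S P) (CQ : C1_on S Q) (NS : non_singular_on S P Q).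
Local Notation L := (level_set S P c).

Lemma sec_uniq {J K : set R} {sig tau : R -> R * R} {t0 : R} : open J -> is_interval J -> open K -> is_interval K ->
  is_sec P Q c J sig -> is_sec P Q c K tau -> J t0 -> K t0 -> sig t0 = tau t0 ->
  forall t, J t -> K t -> sig t = tau t.
Proof.
move=> oJ iJ oK iK hs ht Jt0 Kt0 e0.
set A := J `&` K.
have cA : connected A by apply/connected_intervalP; apply: itvI.
set E := [set t | A t /\ sig t = tau t].
suff EA : E = A.
  move=> t Jt Kt; have : E t by rewrite EA.
  by case.
apply: clopen_conn => //.
- by move=> t [].
- by exists t0.
- move=> t [[Jt Kt] et].
  have [[Ls Pst] Qst cs] := hs t Jt.
  have [_ Qtt ct] := ht t Kt.
  have [dF dF0 [_ injF]] := @loc_inj P Q (sig t) CP CQ Ls (NS _ Ls).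
  have oA : open A by apply: openI.
  have nA : \forall t' \near t, A t' by apply: oA.
  have n1 := near_ball_cont dF0 cs.
  have n2 := near_ball_cont dF0 ct.
  near=> t'; right.
  have At' : A t' by near: t'.
  split => //.
  have [[Ls' Ps'] Qs' _] := hs t' At'.1.
  have [[Lt' Pt'] Qt' _] := ht t' At'.2.
  apply: injF.
  - by near: t'.
  - by rewrite et; near: t'.
  - by rewrite Ps' Pt'.
  - by rewrite Qs' Qt'.
- move=> t [Jt Kt] cl; split; first by [].
  have [_ _ cs] := hs t Jt; have [_ _ ct] := ht t Kt.
  apply: eq_of_close => e e0'.
  have n1 := near_ball_cont e0' cs.
  have n2 := near_ball_cont e0' ct.
  have [t' [[_ et'] [b1 b2]]] := cl _ (filterI n1 n2).
  by exists (sig t'); split => //; rewrite et'.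
Unshelve. all: by end_near.
Qed.

Lemma sec_glue {J K : set R} {sig tau : R -> R * R} {t0 : R} : open J -> is_interval J -> open K -> is_interval K ->
  is_sec P Q c J sig -> is_sec P Q c K tau -> J t0 -> K t0 -> sig t0 = tau t0 ->
  exists rho, [/\ is_sec P Q c (J `|` K) rho, (forall t, J t -> rho t = sig t)
    & (forall t, K t -> rho t = tau t)].
Proof.
move=> oJ iJ oK iK hs ht Jt0 Kt0 e0.
have U := sec_uniq oJ iJ oK iK hs ht Jt0 Kt0 e0.
set rho := fun t => if `[< J t >] then sig t else tau t.
have rJ t : J t -> rho t = sig t by move=> Jt; rewrite /rho asboolT.
have rK t : K t -> rho t = tau t.
  move=> Kt; rewrite /rho; case: asboolP => // Jt; exact: U.
exists rho; split => // t [Jt|Kt].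
- have [h1 h2 h3] := hs t Jt; rewrite rJ //; split => //.
  apply: (cont_near_eq _ h3); have : \forall t' \near t, J t' by apply: oJ.
  by apply: filterS => t'; exact: rJ.
- have [h1 h2 h3] := ht t Kt; rewrite rK //; split => //.
  apply: (cont_near_eq _ h3); have : \forall t' \near t, K t' by apply: oK.
  by apply: filterS => t'; exact: rK.
Qed.

Lemma main p q : connected L -> L p -> L q -> Q p = Q q -> p = q.
Proof.
move=> cL Lp Lq Qpq.
set d := Q p.
set Ss := [set x : R * R | exists (J : set R) (sig : R -> R * R), [/\ open J, is_interval J, is_sec P Q c J sig,
   J d /\ sig d = p & exists2 t, J t & sig t = x]].
have chartS (x : R * R) : L x -> exists2 r : R, 0 < r & exists tau : R -> R * R,
    [/\ tau (Q x) = x, is_sec P Q c [set v | `|v - Q x| < r] tau &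
     nbhs x (fun w => L w -> exists2 v, `|v - Q x| < r & tau v = w)].
  move=> Lx; have [r r0 [tau [h1 [h2 h3]]]] := @chart P Q c x CP CQ NS Lx.
  by exists r => //; exists tau; split.
have SL : Ss `<=` L by move=> x [J [sig [_ _ hs _ [t Jt <-]]]]; have [] := hs t Jt.
have extend (x : R * R) (J : set R) (sig : R -> R * R) (r : R) (tau : R -> R * R) (t0 : R) : open J -> is_interval J -> is_sec P Q c J sig ->
    J d -> sig d = p -> is_sec P Q c [set v | `|v - Q x| < r] tau ->
    J t0 -> `|t0 - Q x| < r -> sig t0 = tau t0 ->
    forall v, `|v - Q x| < r -> Ss (tau v).
  move=> oJ iJ hs Jd sd ht JQ KQ eQ v hv.
  have [rho [hr r1 r2]] := sec_glue oJ iJ (@open_ballR (Q x) r) (@itv_ball (Q x) r)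
    hs ht JQ KQ eQ.
  exists (J `|` [set v | `|v - Q x| < r]), rho; split.
  - by apply: openU => //; exact: open_ballR.
  - exact: itvU (@itv_ball (Q x) r) JQ KQ.
  - exact: hr.
  - by split; [left | rewrite r1].
  - by exists v; [right | rewrite r2].
have SsL : Ss = L.
  apply: clopen_conn => //.
  - have [r r0 [tau [t1 t2 t3]]] := chartS p Lp.
    exists p; exists [set v | `|v - Q p| < r], tau; split.
    + exact: open_ballR.
    + exact: itv_ball.
    + exact: t2.
    + by split => //=; rewrite subrr normr0.
    + by exists (Q p) => //=; rewrite subrr normr0.
  - move=> x Sx; have Lx := SL x Sx.
    case: Sx => J [sig [oJ iJ hs [Jd sd] [t Jt sx]]].
    have [r r0 [tau [t1 t2 t3]]] := chartS x Lx.
    have Qxt : Q x = t by rewrite -sx; have [] := hs t Jt.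
    apply: filterS t3 => w hw.
    have [Lw|nLw] := pselect (L w); last by left.
    right; have [v hv <-] := hw Lw.
    have KQ : `|t - Q x| < r by rewrite Qxt subrr normr0.
    apply: (extend x J sig r tau t) => //.
    by move: t1; rewrite Qxt => ->.
  - move=> x Lx cl.
    have [r r0 [tau [t1 t2 t3]]] := chartS x Lx.
    have [y [Sy Ny]] := cl _ t3.
    have [v hv tv] := Ny (SL y Sy).
    case: Sy => J [sig [oJ iJ hs [Jd sd] [t Jt sy]]].
    have Qyt : Q y = t by rewrite -sy; have [] := hs t Jt.
    have Qyv : Q y = v by rewrite -tv; have [] := t2 v hv.
    have KQ : `|t - Q x| < r by rewrite -Qyt Qyv.
    have e1 : sig t = tau t by rewrite sy -tv -Qyv Qyt.
    have x0 : `|Q x - Q x| < r by rewrite subrr normr0.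
    by rewrite -t1; apply: (extend x J sig r tau t).
have : Ss q by rewrite SsL.
case=> J [sig [oJ iJ hs [Jd sd] [t Jt sq]]].
have Qqt : Q q = t by rewrite -sq; have [] := hs t Jt.
by rewrite -sq -Qqt -Qpq.
Qed.
End Sec.
End S.

Theorem lemma1 (R : realType) (I : set R) (P Q : R * R -> R) :
  open I -> is_interval I ->
  C1_on (strip I) P -> C1_on (strip I) Q ->
  non_singular_on (strip I) P Q ->
  ((forall c : R, connected (level_set (strip I) P c)) \/
   (forall c : R, connected (level_set (strip I) Q c))) ->
  forall p q : R * R, strip I p -> strip I q ->
    (P p, Q p) = (P q, Q q) -> p = q.
Proof.
move=> oI iI CP CQ NS hconn p q Sp Sq [Ppq Qpq].
case: hconn => hc.
  by apply: (@main R I oI P Q (P p) CP CQ NS p q (hc (P p))).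
have NS' : non_singular_on (strip I) Q P.
  move=> w hw; have := NS w hw; rewrite /jacobian_det.
  have -> : dx Q w * dy P w - dy Q w * dx P w = - (dx P w * dy Q w - dy P w * dx Q w) by ring.
  by rewrite oppr_eq0.
by apply: (@main R I oI Q P (Q p) CQ CP NS' p q (hc (Q p))).
Qed.
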